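(* Under the standing assumptions below, let $k\in\{0,\dots,n-1\}$ and $I(x_{k+1})=\{c_1,\dots,c_m\}$ with $c_1\prec\dots\prec c_m$. For every $j\le m$ and every $a:\mathrm{var}(c_j)\setminus X_k\to D$ such that all denominators below are nonzero, $$\prod_{i=1}^{j}\frac{w(I_k(c_i),a)}{w(I_k(c_i)\setminus\{c_i\},a)}=\frac{w(I_{k+1}(c_j),a)}{w(I_{k+1}(c_j)\setminus\{c_1,\dots,c_j\},a)}.$$
   Context: Standing assumptions: $I$ is a finite set of weighted constraints with default values on a finite domain $D$ (a constraint $c$ on variables $\mathrm{var}(c)$ is a pair $(f,\delta)$, $f:S\to\mathbb Q_{\ge0}$, $S\subseteq D^{\mathrm{var}(c)}$, $\delta\in\mathbb Q_{\ge0}$, inducing $c(a)=f(a)$ on $S$ and $\delta$ elsewhere) such that distinct constraints have distinct variable sets, $\mathcal H(I)=(\mathrm{var}(I),\{\mathrm{var}(c)\mid c\in I\})$ is $\beta$-acyclic, and $(x_1,\dots,x_n)$ is a $\beta$-elimination order of $\mathcal H(I)$ (an enumeration of $\mathrm{var}(I)$ such that for each $k$, $x_{k+1}$ is a nest point—the edges containing it are totally ordered by inclusion—of the hypergraph with vertices $\mathrm{var}(I)\setminus X_k$ and edges $\{e\setminus X_k\}\setminus\{\emptyset\}$). $X_k=\{x_1,\dots,x_k\}$. For $c,d\in I$: $c\prec d$ iff there is $k$ with $\mathrm{var}(c)\setminus X_k\subsetneq\mathrm{var}(d)\setminus X_k$; $c\preceq d$ iff $c\prec d$ or $c=d$. $\prec_0=\emptyset$;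 $c\prec_{k+1}d$ iff $c\prec_k d$ or there is $e\in I$ with $c\preceq_k e\prec d$ and $x_{k+1}\in\mathrm{var}(d)\cap\mathrm{var}(e)$; $c\preceq_k d$ iff $c=d$ or $c\prec_k d$. $I_k(c)=\{d\in I\mid d\preceq_k c\}$; $I(x)=\{c\in I\mid x\in\mathrm{var}(c)\}$. For $J\subseteq I$ and $a\in D^W$: $w(J,a)=\sum_{b\in D^{\mathrm{var}(J)},\,b\text{ agrees with }a\text{ on }W\cap\mathrm{var}(J)}\prod_{c\in J}c(b|_{\mathrm{var}(c)})$, with $w(\emptyset,a)=1$. *)

(* Defs.v *)
From HB Require Import structures.
From mathcomp Require Import all_boot all_order all_algebra.
Set Implicit Arguments. Unset Strict Implicit. Unset Printing Implicit Defensive.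
Import Order.TTheory GRing.Theory Num.Theory.
Local Open Scope ring_scope.

(* A weighted constraint with default value: scope var(c), support S ⊆ D^{var(c)},
   f : S -> Q (only its values on S matter), default value delta. *)
Record constraint (V D : finType) := Constraint {
  scope : {set V};
  supp : {set {ffun {x : V | x \in scope} -> D}};
  fval : {ffun {ffun {x : V | x \in scope} -> D} -> rat};
  dflt : rat }.

Definition wf_constraint (V D : finType) (c : constraint V D) : Prop :=
  (forall r, r \in supp c -> 0 <= fval c r) /\ 0 <= dflt c.

Definition restrict (V D : finType) (c : constraint V D) (b : {ffun V -> D})
  : {ffun {x : V | x \in scope c} -> D} :=
  [ffun y => b (val y)].

Definition ceval (V D : finType) (c : constraint V D) (b : {ffun V -> D}) : rat :=
  let r := restrict c b in if r \in supp c then fval c r else dflt c.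

Definition varJ (V D K : finType) (C : K -> constraint V D) (J : {set K}) : {set V} :=
  \bigcup_(c in J) scope (C c).

(* w(J, a) for an assignment a on W (a is given as a total function; only its
   values on W are relevant).  The sum over b : D^{var(J)} agreeing with a on
   W ∩ var(J) is encoded as a sum over total assignments b that coincide with a
   outside var(J) \ W. *)
Definition w (V D K : finType) (C : K -> constraint V D) (J : {set K})
  (W : {set V}) (a : {ffun V -> D}) : rat :=
  \sum_(b : {ffun V -> D} | [forall x, (x \notin varJ C J :\: W) ==> (b x == a x)])
     \prod_(c in J) ceval (C c) b.

Definition Xk (V : finType) (xs : seq V) (k : nat) : {set V} := [set x in take k xs].

(* xat xs k A  <=>  x_{k+1} \in A  (false if k >= n) *)
Definition xat (V : finType) (xs : seq V) (k : nat) (A : {set V}) : bool :=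
  if drop k xs is x :: _ then x \in A else false.

Definition is_beta_elim_order (V D K : finType) (C : K -> constraint V D) (xs : seq V) : Prop :=
  [/\ uniq xs,
      [set x in xs] = \bigcup_(c : K) scope (C c)
    & forall k, (k < size xs)%N -> forall c d : K,
        xat xs k (scope (C c)) -> xat xs k (scope (C d)) ->
        (scope (C c) :\: Xk xs k \subset scope (C d) :\: Xk xs k)
        || (scope (C d) :\: Xk xs k \subset scope (C c) :\: Xk xs k)].

Definition prec (V D K : finType) (C : K -> constraint V D) (xs : seq V) (c d : K) : bool :=
  [exists k : 'I_(size xs).+1,
     (scope (C c) :\: Xk xs k) \proper (scope (C d) :\: Xk xs k)].

Fixpoint preck (V D K : finType) (C : K -> constraint V D) (xs : seq V) (k : nat) (c d : K)
  : bool :=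
  if k is k'.+1 then
    preck C xs k' c d ||
    [exists e : K, [&& (c == e) || preck C xs k' c e, prec C xs e d,
                       xat xs k' (scope (C d)) & xat xs k' (scope (C e))]]
  else false.

Definition preceqk (V D K : finType) (C : K -> constraint V D) (xs : seq V) (k : nat) (c d : K)
  : bool := (c == d) || preck C xs k c d.

Definition Ik (V D K : finType) (C : K -> constraint V D) (xs : seq V) (k : nat) (c : K)
  : {set K} := [set d | preceqk C xs k d c].

(* Main.v *)
Require Import Defs.
From HB Require Import structures.
From mathcomp Require Import all_boot all_order all_algebra.
From mathcomp Require Import ring.
Import Order.TTheory GRing.Theory Num.Theory.
Local Open Scope ring_scope.

Section Fact.
Set Implicit Arguments. Unset Strict Implicit.
Variables (V D K : finType) (C : K -> constraint V D).
Local Notation sc c := (scope (C c)).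

Lemma ceval_ext c (b b' : {ffun V -> D}) :
  (forall x, x \in sc c -> b x = b' x) -> ceval (C c) b = ceval (C c) b'.
Proof.
move=> H; rewrite /ceval /restrict.
have -> : [ffun y => b (val y)] = [ffun y : {x | x \in sc c} => b' (val y)].
  by apply/ffunP=> y; rewrite !ffunE H // (valP y).
done.
Qed.

Lemma varJP (J : {set K}) x :
  reflect (exists2 c, c \in J & x \in sc c) (x \in varJ C J).
Proof. exact: bigcupP. Qed.

Lemma agreeP (F : {set V}) (a b : {ffun V -> D}) :
  reflect (forall x, x \notin F -> b x = a x)
          [forall x, (x \notin F) ==> (b x == a x)].
Proof.
apply: (iffP forallP) => H x.
  by move=> Hx; apply/eqP; move/implyP: (H x); apply.
by apply/implyP=> Hx; rewrite H.
Qed.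

Lemma w_sep (J1 J2 : {set K}) (W : {set V}) (a : {ffun V -> D}) :
  [disjoint J1 & J2] ->
  (forall f g y, f \in J1 -> g \in J2 -> y \in sc f -> y \in sc g -> y \in W) ->
  w C (J1 :|: J2) W a = w C J1 W a * w C J2 W a.
Proof.
move=> dJ sepJ; rewrite /w.
set F1 := varJ C J1 :\: W; set F2 := varJ C J2 :\: W.
have dF : forall x, x \in F1 -> x \in F2 -> False.
  move=> x; rewrite !inE => /andP[xW /varJP[f fJ xf]] /andP[_ /varJP[g gJ xg]].
  by move: xW; rewrite (sepJ f g x).
have eF : varJ C (J1 :|: J2) :\: W = F1 :|: F2.
  by rewrite /varJ bigcup_setU setDUl.
rewrite eF big_distrlr /= pair_big /=.
pose mg (p : {ffun V -> D} * {ffun V -> D}) :=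
  [ffun x => if x \in F1 then p.1 x else p.2 x].
pose pj (b : {ffun V -> D}) :=
  ([ffun x => if x \in F1 then b x else a x], [ffun x => if x \in F2 then b x else a x]).
rewrite (reindex_onto mg pj); last first.
  move=> b /agreeP Hb; apply/ffunP=> x; rewrite !ffunE /=.
  case: (boolP (x \in F1)) => x1; rewrite ?ffunE //=.
  case: (boolP (x \in F2)) => x2 //; by rewrite Hb // inE negb_or x1 x2.
rewrite [LHS](eq_bigl (fun p : {ffun V -> D} * {ffun V -> D} => [forall x, (x \notin F1) ==> (p.1 x == a x)] &&
           [forall x, (x \notin F2) ==> (p.2 x == a x)])); last first.
  move=> [p1 p2] /=.
  apply/idP/idP.
    case/andP=> _ /eqP[E1 E2].
    apply/andP; split; apply/agreeP=> x xF.
      by rewrite -E1 ffunE (negbTE xF).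
    by rewrite -E2 ffunE (negbTE xF).
  case/andP=> /agreeP H1 /agreeP H2; apply/andP; split.
    apply/agreeP=> x; rewrite inE negb_or => /andP[x1 x2].
    by rewrite ffunE /= (negbTE x1) H2.
  apply/eqP; congr pair; apply/ffunP=> x; rewrite !ffunE /=.
    by case: (boolP (x \in F1)) => x1 //; rewrite H1.
  case: (boolP (x \in F2)) => x2.
    by case: (boolP (x \in F1)) => x1 //; case: (dF x x1 x2).
  by rewrite H2.
apply: eq_bigr => [[p1 p2]] /= /andP[/agreeP H1 /agreeP H2].
rewrite (eq_bigl [predU J1 & J2]) ?bigU //=; last by move=> c; rewrite !inE. congr (_ * _); apply: eq_bigr => c cJ; apply: ceval_ext => x xc;
  rewrite ffunE /=.
  case: (boolP (x \in F1)) => x1 //.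
  have xW : x \in W.
    by apply: contraNT x1 => xW; rewrite inE xW; apply/varJP; exists c.
  by rewrite H2 ?H1 // inE xW.
case: (boolP (x \in F1)) => x1 //; exfalso; apply: (dF x x1).
move: x1; rewrite !inE => /andP[-> _] /=; apply/varJP; exists c => //.
Qed.

End Fact.

Section Comb.
Set Implicit Arguments. Unset Strict Implicit.
Variables (V D K : finType) (C : K -> constraint V D) (xs : seq V) (y0 : V).
Hypothesis Hinj : injective (fun c => scope (C c)).
Hypothesis Huniq : uniq xs.
Hypothesis Hnest : forall k, (k < size xs)%N -> forall c d : K,
        xat xs k (scope (C c)) -> xat xs k (scope (C d)) ->
        (scope (C c) :\: Xk xs k \subset scope (C d) :\: Xk xs k)
        || (scope (C d) :\: Xk xs k \subset scope (C c) :\: Xk xs k).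
Local Notation sc c := (scope (C c)).
Local Notation X := (Xk xs).
Local Notation xv l := (nth y0 xs l).

Lemma xatE l (A : {set V}) : xat xs l A = (l < size xs)%N && (xv l \in A).
Proof.
rewrite /xat; case: (ltnP l (size xs)) => Hl /=.
  by rewrite (drop_nth y0 Hl).
by rewrite drop_oversize.
Qed.

Lemma X0 : X 0 = set0.
Proof. by apply/setP=> x; rewrite !inE take0. Qed.

Lemma XS l : (l < size xs)%N -> X l.+1 = X l :|: [set xv l].
Proof.
move=> Hl; apply/setP=> x; rewrite !inE (take_nth y0 Hl) mem_rcons in_cons.
by rewrite orbC.
Qed.

Lemma xv_notin l : (l < size xs)%N -> xv l \notin X l.
Proof.
move=> Hl; rewrite inE in_take_leq ?(ltnW Hl) //.
by rewrite index_uniq // ltnn.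
Qed.

Lemma X_mono l l' : (l <= l')%N -> X l \subset X l'.
Proof.
move=> Hll; apply/subsetP=> x; rewrite !inE => Hx.
by move: Hx; rewrite -(take_takel xs Hll) => /mem_take.
Qed.

Lemma subD_mono (A B : {set V}) l l' : (l <= l')%N ->
  A :\: X l \subset B :\: X l -> A :\: X l' \subset B :\: X l'.
Proof.
move=> Hll /subsetP H; apply/subsetP=> x; rewrite !in_setD => /andP[xl xA].
have xl0 : x \notin X l.
  apply: contra xl => xl1; by move/subsetP: (X_mono Hll); apply.
by move: (H x); rewrite !in_setD xl0 xA xl => /(_ isT) /andP[].
Qed.

Lemma precP c d : reflect (exists2 l, (l <= size xs)%N &
   sc c :\: X l \proper sc d :\: X l) (prec C xs c d).
Proof.
apply: (iffP existsP) => [[l Hl]|[l Hl H]].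
  by exists l => //; rewrite -ltnS.
by exists (Ordinal (n:=(size xs).+1) (m:=l) Hl).
Qed.

Lemma prec_antisym c d : prec C xs c d -> prec C xs d c -> False.
Proof.
move=> /precP[l1 _ H1] /precP[l2 _ H2].
case: (leqP l1 l2) => Hl.
  have := subD_mono Hl (proper_sub H1).
  by move=> /(sub_proper_trans)/(_ H2); rewrite properxx.
have := subD_mono (ltnW Hl) (proper_sub H2).
by move=> /(sub_proper_trans)/(_ H1); rewrite properxx.
Qed.

Lemma prec_irr c : prec C xs c c = false.
Proof. by apply/negbTE/negP => H; exact: (prec_antisym H H). Qed.

Lemma prec_trans : transitive (prec C xs).
Proof.
move=> d c e /precP[l1 b1 H1] /precP[l2 b2 H2]; apply/precP.
case: (leqP l1 l2) => Hl.
  exists l2 => //; exact: sub_proper_trans (subD_mono Hl (proper_sub H1)) H2.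
exists l1 => //; exact: proper_sub_trans H1 (subD_mono (ltnW Hl) (proper_sub H2)).
Qed.


Lemma preceqkS l c d : preceqk C xs l.+1 c d = preceqk C xs l c d ||
  [exists e, [&& preceqk C xs l c e, prec C xs e d, xat xs l (sc d) & xat xs l (sc e)]].
Proof. by rewrite /preceqk /= orbA. Qed.

Lemma preceqk0 c d : preceqk C xs 0 c d = (c == d).
Proof. by rewrite /preceqk /= orbF. Qed.

Lemma preceqk_prec l c d : preceqk C xs l c d -> c = d \/ prec C xs c d.
Proof.
elim: l c d => [|l IH] c d; first by rewrite preceqk0 => /eqP; left.
rewrite preceqkS => /orP[/IH //|/existsP[e /and4P[H1 H2 _ _]]].
right; case: (IH _ _ H1) => [->//|H3]; exact: prec_trans H3 H2.
Qed.

Lemma nest_sub l c e : (l < size xs)%N -> xat xs l (sc e) -> xat xs l (sc c) ->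
  ~~ prec C xs c e -> sc e :\: X l \subset sc c :\: X l.
Proof.
move=> Hl He Hc Hp; case/orP: (Hnest Hl He Hc) => // H.
case: (eqVneq (sc c :\: X l) (sc e :\: X l)) => [->//|ne].
case/negP: Hp; apply/precP; exists l; first exact: ltnW.
by rewrite properEneq ne.
Qed.

Lemma ik_sc l f c x : (l <= size xs)%N -> preceqk C xs l f c ->
  x \in sc f -> x \in sc c :|: X l.
Proof.
elim: l f c => [|l IH] f c Hl.
  by rewrite preceqk0 => /eqP-> xf; rewrite inE xf.
rewrite preceqkS => /orP[H xf|/existsP[e /and4P[H1 H2 Hc He]]] /=.
  move: (IH f c (ltnW Hl) H xf); rewrite !in_setU => /orP[->//|xl].
  by apply/orP; right; move/subsetP: (X_mono (leqnSn l)); apply.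
move=> xf; move: (IH f e (ltnW Hl) H1 xf); rewrite in_setU => /orP[xe|xl].
  case: (boolP (x \in X l)) => xl.
    by rewrite in_setU; apply/orP; right; move/subsetP: (X_mono (leqnSn l)); apply.
  have Hns : ~~ prec C xs c e by apply/negP=> H3; apply: (prec_antisym H2 H3).
  move/subsetP: (nest_sub Hl He Hc Hns) => /(_ x).
  rewrite !in_setD xl xe => /(_ isT) /andP[_ xc]; by rewrite in_setU xc.
by rewrite in_setU; apply/orP; right; move/subsetP: (X_mono (leqnSn l)); apply.
Qed.

Lemma ik_xv l f c : (l < size xs)%N -> preceqk C xs l f c ->
  xv l \in sc f -> xv l \in sc c.
Proof.
move=> Hl H xf; move: (ik_sc (ltnW Hl) H xf).
by rewrite in_setU (negbTE (xv_notin Hl)) orbF.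
Qed.

Lemma setD_split (A : {set V}) m : (m < size xs)%N ->
  A :\: X m = (A :\: X m.+1) :|: (A :&: [set xv m]).
Proof.
move=> Hm; apply/setP=> x; rewrite (XS Hm) in_setU in_setD in_setD in_setI in_setU in_set1.
case: (eqVneq x (xv m)) => [->|ne] /=.
  by rewrite (negbTE (xv_notin Hm)) /= andbT.
by rewrite orbF andbF orbF.
Qed.

Lemma prec_total l c d : (l < size xs)%N -> xat xs l (sc c) -> xat xs l (sc d) ->
  c != d -> prec C xs c d || prec C xs d c.
Proof.
move=> Hl Hc Hd; apply: contraR; rewrite negb_or => /andP[ncd ndc].
have eqm : forall i, (i <= l)%N -> sc c :\: X (l - i) = sc d :\: X (l - i).
  elim=> [|i IH] Hi.
    rewrite subn0; case/orP: (Hnest Hl Hc Hd) => H.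
      case: (eqVneq (sc c :\: X l) (sc d :\: X l)) => // ne.
      by case/negP: ncd; apply/precP; exists l; [exact: ltnW| rewrite properEneq ne].
    case: (eqVneq (sc d :\: X l) (sc c :\: X l)) => // ne.
    by case/negP: ndc; apply/precP; exists l; [exact: ltnW| rewrite properEneq ne].
  have Hm : (l - i.+1 < size xs)%N.
    by apply: leq_ltn_trans Hl; apply: leq_subr.
  move: (IH (ltnW Hi)); rewrite -(subnSK Hi) => E.
  rewrite !(setD_split _ Hm) E.
  case: (boolP (xv (l - i.+1) \in sc c)) => xc; case: (boolP (xv (l - i.+1) \in sc d)) => xd.
  - congr (_ :|: _); apply/setP=> x; rewrite !inE.
    by case: (eqVneq x (xv (l - i.+1))) => [->|]; rewrite ?xc ?xd ?andbF.
  - case/negP: ndc; apply/precP; exists (l - i.+1)%N; first exact: ltnW.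
    rewrite !(setD_split _ Hm) E; apply/properP; split.
      apply/subsetP=> x; rewrite !in_setU => /orP[->//|].
      rewrite in_setI in_set1 => /andP[xdd /eqP xe].
      by move: xd; rewrite -xe xdd.
    exists (xv (l - i.+1)); first by rewrite !in_setU in_setI in_set1 xc eqxx orbT.
    by rewrite !in_setU in_setI in_set1 eqxx andbT (negbTE xd) orbF in_setD (XS Hm) in_setU in_set1 eqxx orbT.
  - case/negP: ncd; apply/precP; exists (l - i.+1)%N; first exact: ltnW.
    rewrite !(setD_split _ Hm) -E; apply/properP; split.
      apply/subsetP=> x; rewrite !in_setU => /orP[->//|].
      rewrite in_setI in_set1 => /andP[xdd /eqP xe].
      by move: xc; rewrite -xe xdd.
    exists (xv (l - i.+1)); first by rewrite !in_setU in_setI in_set1 xd eqxx orbT.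
    by rewrite !in_setU in_setI in_set1 eqxx andbT (negbTE xc) orbF in_setD (XS Hm) in_setU in_set1 eqxx orbT.
  - congr (_ :|: _); apply/setP=> x; rewrite !inE.
    by case: (eqVneq x (xv (l - i.+1))) => [->|]; rewrite ?(negbTE xc) ?(negbTE xd) ?andbF.
move: (eqm l (leqnn l)); rewrite subnn X0 !setD0 => /Hinj ->.
by rewrite eqxx.
Qed.


Definition sepX l (J1 J2 : {set K}) := forall f g, f \in J1 -> g \in J2 ->
  f != g /\ (forall y, y \in sc f -> y \in sc g -> y \notin X l).

Lemma sepX_sym l J1 J2 : sepX l J1 J2 -> sepX l J2 J1.
Proof.
move=> H f g fJ gJ; case: (H g f gJ fJ) => ne Hy; split; first by rewrite eq_sym.
by move=> y yf yg; apply: Hy.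
Qed.

Definition lam l c d := Ik C xs l c \subset Ik C xs l d \/ Ik C xs l d \subset Ik C xs l c
  \/ sepX l (Ik C xs l c) (Ik C xs l d).

Lemma inIk l f c : (f \in Ik C xs l c) = preceqk C xs l f c.
Proof. by rewrite inE. Qed.

Lemma Ik_refl l c : c \in Ik C xs l c.
Proof. by rewrite inIk /preceqk eqxx. Qed.

Lemma IkS_notin l d : xv l \notin sc d -> Ik C xs l.+1 d = Ik C xs l d.
Proof.
move=> dn; apply/setP=> f; rewrite !inIk preceqkS.
case: (boolP [exists e, _]) => [/existsP[e /and4P[_ _ Hx _]]|]; last by rewrite orbF.
by move: Hx; rewrite xatE (negbTE dn) andbF.
Qed.

Lemma IkS_in l d f : (l < size xs)%N -> xv l \in sc d ->
  (f \in Ik C xs l.+1 d) =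
  [exists e, [&& xv l \in sc e, (e == d) || prec C xs e d & f \in Ik C xs l e]].
Proof.
move=> Hl xd; rewrite inIk preceqkS; apply/idP/idP.
  case/orP=> [H|/existsP[e /and4P[H1 H2 _ He]]]; apply/existsP.
    by exists d; rewrite xd eqxx inIk H.
  by exists e; move: He; rewrite xatE Hl /= => ->; rewrite H2 orbT inIk H1.
case/existsP=> e /and3P[xe /orP[/eqP->|H2] fe]; first by rewrite -inIk fe.
apply/orP; right; apply/existsP; exists e.
by rewrite -inIk fe H2 !xatE Hl xe xd.
Qed.

Lemma lam_step l c d : (l < size xs)%N -> (forall c d, lam l c d) ->
  xv l \in sc c -> xv l \notin sc d -> lam l.+1 c d.
Proof.
move=> Hl IH xc xd; rewrite /lam (IkS_notin xd).
case: (boolP [exists e, [&& xv l \in sc e, (e == c) || prec C xs e c &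
                           Ik C xs l d \subset Ik C xs l e]]).
  case/existsP=> e /and3P[xe ec /subsetP sde]; right; left.
  apply/subsetP=> f fd; rewrite (IkS_in _ Hl xc); apply/existsP; exists e.
  by rewrite xe ec sde.
move=> nex; right; right=> f g; rewrite (IkS_in _ Hl xc).
case/existsP=> e /and3P[xe ec fe] gd.
case: (IH e d) => [/subsetP sed|[sde|sep]].
- have := sed e (Ik_refl l e); rewrite inIk => /(ik_xv Hl)/(_ xe) xd'.
  by case/negP: xd.
- by case/negP: nex; apply/existsP; exists e; rewrite xe ec sde.
- case: (sep f g fe gd) => ne Hy; split=> // y yf yg.
  rewrite (XS Hl) in_setU in_set1 negb_or (Hy y yf yg) /=.
  apply/eqP=> ey; move: yg; rewrite ey => yg.
  by move: gd; rewrite inIk => /(ik_xv Hl)/(_ yg); apply/negP.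
Qed.

Lemma laminar l : (l <= size xs)%N -> forall c d, lam l c d.
Proof.
elim: l => [|l IH] Hl c d.
  case: (eqVneq c d) => [->|ne]; first by left.
  right; right=> f g; rewrite !inIk !preceqk0 => /eqP-> /eqP->; split=> //.
  by move=> y _ _; rewrite X0 inE.
have Hl' : (l < size xs)%N by [].
have IH' := IH (ltnW Hl).
case: (boolP (xv l \in sc c)) => xc; case: (boolP (xv l \in sc d)) => xd.
- case: (eqVneq c d) => [->|ne]; first by left.
  have : xat xs l (sc c) by rewrite xatE Hl' xc.
  have : xat xs l (sc d) by rewrite xatE Hl' xd.
  move=> Hd Hc; case/orP: (prec_total Hl' Hc Hd ne) => P.
    left; apply/subsetP=> f; rewrite !(IkS_in _ Hl') //.
    case/existsP=> e /and3P[xe ec fe]; apply/existsP; exists e.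
    rewrite xe fe andbT; case/orP: ec => [/eqP->|ec]; first by rewrite P orbT.
    by rewrite (prec_trans ec P) orbT.
  right; left; apply/subsetP=> f; rewrite !(IkS_in _ Hl') //.
  case/existsP=> e /and3P[xe ec fe]; apply/existsP; exists e.
  rewrite xe fe andbT; case/orP: ec => [/eqP->|ec]; first by rewrite P orbT.
  by rewrite (prec_trans ec P) orbT.
- exact: lam_step.
- case: (lam_step Hl' IH' xd xc) => [H|[H|H]]; [right; left|left|right; right] => //.
  exact: sepX_sym.
- rewrite /lam (IkS_notin xc) (IkS_notin xd).
  case: (IH' c d) => [H|[H|H]]; [left|right; left|right; right] => //.
  move=> f g fc gd; case: (H f g fc gd) => ne Hy; split=> // y yf yg.
  rewrite (XS Hl') in_setU in_set1 negb_or (Hy y yf yg) /=.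
  apply/eqP=> ey; move: yf; rewrite ey => yf.
  by move: fc; rewrite inIk => /(ik_xv Hl')/(_ yf); apply/negP.
Qed.


Variables (k : nat) (cs : seq K) (j : nat) (a : {ffun V -> D}) (c0 : K).
Hypothesis Hk : (k < size xs)%N.
Hypothesis Hcsu : uniq cs.
Hypothesis Hcs : forall c, (c \in cs) = xat xs k (sc c).
Hypothesis Hpw : pairwise (prec C xs) cs.
Hypothesis Hj : (j < size cs)%N.

Local Notation cj := (nth c0 cs j).
Local Notation W := (sc cj :\: X k).
Local Notation T e := (Ik C xs k e).
Definition U (p : seq K) := \bigcup_(e in [set e0 in p]) T e.
Local Notation S p := [set e0 in p].

Lemma inU f p : (f \in U p) = has (fun e => f \in T e) p.
Proof.
apply/bigcupP/hasP => [[e ep fe]|[e ep fe]]; exists e => //; [move: ep; rewrite inE|rewrite inE] => //.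

Qed.

Lemma xcs e : e \in cs -> xv k \in sc e.
Proof. by rewrite Hcs xatE Hk. Qed.

Lemma prec_take e n : e \in cs -> (n < size cs)%N ->
  prec C xs e (nth c0 cs n) = (e \in take n cs).
Proof.
move=> ecs Hn; rewrite in_take_leq ?(ltnW Hn) //.
have Hi : (index e cs < size cs)%N by rewrite index_mem.
have {1}-> : e = nth c0 cs (index e cs) by rewrite nth_index.
case: (ltngtP (index e cs) n) => H.
- by move/pairwiseP: Hpw => /(_ c0 (index e cs) n); apply => //; rewrite inE.
- apply/negbTE/negP=> P.
  have P2 : prec C xs (nth c0 cs n) (nth c0 cs (index e cs)).
    by move/pairwiseP: Hpw => /(_ c0 n (index e cs)); apply => //; rewrite inE.
  exact: prec_antisym P P2.
- by rewrite H prec_irr.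
Qed.

Lemma take_sub n e : (n <= j.+1)%N -> e \in take n cs -> e \in take j.+1 cs.
Proof.
move=> Hn; rewrite -(take_takel cs Hn); exact: mem_take.
Qed.

Lemma shareW e f y : e \in take j.+1 cs -> f \in T e -> y \in sc f -> y \notin X k -> y \in W.
Proof.
move=> ej fe yf yX; rewrite in_setD yX /=.
move: (ik_sc (ltnW Hk) (elimT idP (etrans (esym (inIk _ _ _)) fe)) yf).
rewrite in_setU (negbTE yX) orbF => ye.
move: ej; rewrite (take_nth c0 Hj) mem_rcons in_cons => /orP[/eqP<-//|ej].
have ecs : e \in cs := mem_take ej.
have P : prec C xs e cj by rewrite prec_take.
have Hns : ~~ prec C xs cj e by apply/negP=> P2; exact: prec_antisym P P2.
have xe : xat xs k (sc e) by rewrite -Hcs.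
have xj : xat xs k (sc cj) by rewrite -Hcs mem_nth.
move/subsetP: (nest_sub Hk xe xj Hns) => /(_ y); rewrite !in_setD yX ye.
by move=> /(_ isT) /andP[].
Qed.

Definition sepW (J1 J2 : {set K}) := forall f g, f \in J1 -> g \in J2 ->
  f != g /\ (forall y, y \in sc f -> y \in sc g -> y \in W).

Lemma w_sepW (J1 J2 : {set K}) : sepW J1 J2 -> w C (J1 :|: J2) W a = w C J1 W a * w C J2 W a.
Proof.
move=> H; apply: w_sep.
  rewrite disjoint_subset; apply/subsetP=> f f1; rewrite inE; apply/negP=> f2.
  by case: (H f f f1 f2); rewrite eqxx.
by move=> f g y f1 g2; case: (H f g f1 g2) => _; apply.
Qed.

Lemma sepW_sub (J1 J2 J1' J2' : {set K}) : J1' \subset J1 -> J2' \subset J2 -> sepW J1 J2 -> sepW J1' J2'.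
Proof.
by move=> /subsetP s1 /subsetP s2 H f g f1 g2; apply: H; [apply: s1|apply: s2].
Qed.

Definition Pcl (p : seq K) :=
  (\prod_(e <- p) w C (T e) W a) * w C (U p :\: S p) W a =
  (\prod_(e <- p) w C (T e :\ e) W a) * w C (U p) W a.

Lemma Pcl_step n : (n <= j)%N -> Pcl (take n cs) -> Pcl (take n.+1 cs).
Proof.
move=> Hn IH.
have Hns : (n < size cs)%N by apply: leq_ltn_trans Hj.
rewrite (take_nth c0 Hns).
set p := take n cs; set c' := nth c0 cs n.
have c'cs : c' \in cs by apply: mem_nth.
have c'j : c' \in take j.+1 cs.
  by rewrite in_take_leq // index_uniq.
have pj : forall e, e \in p -> e \in take j.+1 cs by move=> e; apply: take_sub; apply: ltnW.
have pprec : forall e, e \in p -> prec C xs e c'.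
  by move=> e ep; rewrite prec_take // (mem_take ep).
have f1 : c' \notin U p.
  rewrite inU; apply/hasPn=> e ep; rewrite inIk; apply/negP=> H.
  case: (preceqk_prec H) => [E|P].
    by move: (pprec e ep); rewrite E prec_irr.
  exact: prec_antisym P (pprec e ep).
have lamk := laminar (ltnW Hk).
set T' := T c'.
set A := U p :&: T'; set Bn := U p :\: T'; set R := T' :\: (U p :|: [set c']).
have f3 : sepW T' Bn.
  move=> f g fT; rewrite in_setD inU => /andP[gT /hasP[e ep ge]].
  split; first by apply/eqP=> E; move: gT; rewrite -E fT.
  case: (lamk e c') => [/subsetP H|[/subsetP H|H]].
  - by move: gT; rewrite H.
  - by case/negP: f1; rewrite inU; apply/hasP; exists e => //; apply: H; apply: Ik_refl.
  - move=> y yf yg; case: (H g f ge fT) => _ /(_ y yg yf) yX.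
    exact: (shareW c'j fT yf yX).
have f4 : sepW R A.
  move=> d f; rewrite !in_setD !in_setU in_set1 negb_or => /andP[/andP[dU dc] dT].
  rewrite in_setI inU => /andP[/hasP[e ep fe] fT].
  split; first by apply/eqP=> E; move: dU; rewrite E inU; apply/negP/negPn/hasP; exists e.
  case: (lamk d e) => [/subsetP H|[/subsetP H|H]].
  - by case/negP: dU; rewrite inU; apply/hasP; exists e => //; apply: H; apply: Ik_refl.
  - have eT : e \in T d by apply: H; apply: Ik_refl.
    have xd : xv k \in sc d.
      by move: eT; rewrite inIk => /(ik_xv Hk); apply; apply: xcs; apply: (mem_take ep).
    have dcs : d \in cs by rewrite Hcs xatE Hk.
    move: dT; rewrite inIk => /preceqk_prec [E|P]; first by move: dc; rewrite E eqxx.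
    case/negP: dU; rewrite inU; apply/hasP; exists d; last exact: Ik_refl.
    by rewrite -prec_take.
  - move=> y yd yf; case: (H d f (Ik_refl k d) fe) => _ /(_ y yd yf) yX.
    exact: (shareW c'j dT yd yX).
have SU : forall f, f \in S p -> f \in U p.
  by move=> f; rewrite inE inU => fp; apply/hasP; exists f => //; apply: Ik_refl.
have c'T : c' \in T' by apply: Ik_refl.
have inS : forall (q : seq K) f, (f \in S q) = (f \in q) by move=> q f; rewrite inE.
have E1 : U p = A :|: Bn by rewrite setID.
have E2 : U p :\: S p = (A :\: S p) :|: (Bn :\: S p).
  by rewrite -setDUl -E1.
have E3 : U (rcons p c') = T' :|: Bn.
  apply/setP=> f; rewrite in_setU in_setD inU has_rcons -inU.
  by case: (f \in T'); case: (f \in U p).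
have E4 : U (rcons p c') :\: S (rcons p c') = (T' :\: S (rcons p c')) :|: (Bn :\: S p).
  apply/setP=> f; rewrite E3 /Bn !(in_setU, in_setD) !inS mem_rcons in_cons.
  case: (eqVneq f c') => [->|ne] /=; first by rewrite (negbTE f1) c'T !andbF.
  by case: (f \in T'); case: (f \in p); case: (f \in U p).
have E5 : T' :\: S (rcons p c') = R :|: (A :\: S p).
  apply/setP=> f; rewrite !in_setU !in_setD !in_setI !in_setU in_set1.
  rewrite !inS mem_rcons in_cons.
  case: (eqVneq f c') => [->|ne] /=.
    by rewrite (negbTE f1) !andbF.
  move: (SU f); rewrite inS; case: (f \in p); case: (f \in U p); case: (f \in T') => //=.
  by move=> /(_ isT).
have E6 : T' :\ c' = R :|: A.
  apply/setP=> f; rewrite !in_setU !in_setD !in_setI !in_setU in_set1.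
  case: (eqVneq f c') => [->|ne] /=.
    by rewrite (negbTE f1) orbT.
  by case: (f \in U p); case: (f \in T').
have sAB : sepW A Bn by apply: sepW_sub f3; [apply: subsetIr|apply: subxx].
have wU : w C (U p) W a = w C A W a * w C Bn W a by rewrite E1 w_sepW.
have wUS : w C (U p :\: S p) W a = w C (A :\: S p) W a * w C (Bn :\: S p) W a.
  by rewrite E2 w_sepW //; apply: sepW_sub sAB; apply: subsetDl.
have wU' : w C (U (rcons p c')) W a = w C T' W a * w C Bn W a by rewrite E3 w_sepW.
have wU'S' : w C (U (rcons p c') :\: S (rcons p c')) W a =
             w C (T' :\: S (rcons p c')) W a * w C (Bn :\: S p) W a.
  by rewrite E4 w_sepW //; apply: sepW_sub f3; apply: subsetDl.
have wTS : w C (T' :\: S (rcons p c')) W a = w C R W a * w C (A :\: S p) W a.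
  by rewrite E5 w_sepW //; apply: sepW_sub f4; [apply: subxx|apply: subsetDl].
have wTc : w C (T' :\ c') W a = w C R W a * w C A W a.
  by rewrite E6 w_sepW.
rewrite /Pcl !big_rcons /= wU'S' wTS wU' wTc.
move: IH; rewrite /Pcl wUS wU => IH.
transitivity (w C T' W a * w C R W a *
  ((\prod_(e <- p) w C (T e) W a) * (w C (A :\: S p) W a * w C (Bn :\: S p) W a))).
  rewrite /T'; ring.
rewrite IH /T'; ring.
Qed.

End Comb.

Theorem lemma8 (V D K : finType) (C : K -> constraint V D) (xs : seq V) :
  (forall c, wf_constraint (C c)) ->
  injective (fun c => scope (C c)) ->
  is_beta_elim_order C xs ->
  forall k : nat, (k < size xs)%N ->
  forall cs : seq K,
    uniq cs ->
    [set c | xat xs k (scope (C c))] = [set c in cs] ->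
    sorted (prec C xs) cs ->
  forall (j : 'I_(size cs)) (a : {ffun V -> D}),
    let cj := tnth (in_tuple cs) j in
    let W := scope (C cj) :\: Xk xs k in
    (forall c, c \in take j.+1 cs -> w C (Ik C xs k c :\ c) W a != 0) ->
    w C (Ik C xs k.+1 cj :\: [set c in take j.+1 cs]) W a != 0 ->
    \prod_(c <- take j.+1 cs) (w C (Ik C xs k c) W a / w C (Ik C xs k c :\ c) W a)
    = w C (Ik C xs k.+1 cj) W a / w C (Ik C xs k.+1 cj :\: [set c in take j.+1 cs]) W a.
Proof.
move=> _ Hinj [Huniq _ Hnest] k Hk cs Hcsu Hcsset Hsorted j a cj W Hden Hden2.
have y0 : V by clear -Hk; destruct xs as [|y s]; [by [] | exact y].
have Hcs : forall c, (c \in cs) = xat xs k (scope (C c)).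
  by move=> c; move/setP: Hcsset => /(_ c); rewrite !inE => ->.
have Hpw : pairwise (prec C xs) cs by rewrite -sorted_pairwise //; exact: prec_trans.
have Hj : (j < size cs)%N by [].
have Ecj : cj = nth cj cs j by exact: (tnth_nth cj (in_tuple cs) j).
move: Hden Hden2; rewrite /W; clearbody cj; move=> Hden Hden2.
have Pn : forall n, (n <= j.+1)%N -> Pcl C xs k cs j a cj (take n cs).
  elim=> [_|n IHn Hn].
    rewrite /Pcl take0 !big_nil.
    have -> : [set e0 in [::]] = set0 :> {set K} by apply/setP=> e; rewrite !inE.
    by rewrite setD0.
  exact: (Pcl_step y0 Hinj Huniq Hnest Hk Hcsu Hcs Hpw Hj Hn (IHn (ltnW Hn))).
have Pf := Pn j.+1 (leqnn _); rewrite /Pcl -Ecj in Pf.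
have xj : nth y0 xs k \in scope (C cj).
  by move: (mem_nth cj Hj); rewrite -Ecj Hcs (@xatE _ xs y0) Hk.
have HU : Ik C xs k.+1 cj = U C xs k (take j.+1 cs).
  apply/setP=> f; rewrite inU (IkS_in _ Hk xj).
  rewrite {1}Ecj (take_nth cj Hj) -Ecj.
  apply/existsP/hasP => [[e /and3P[xe ec fe]]|[e ep fe]].
    exists e => //; rewrite mem_rcons in_cons; case/orP: ec => [->//|P].
    have ecs : e \in cs by rewrite Hcs (@xatE _ xs y0) Hk.
    by move: P; rewrite {1}Ecj (prec_take cj Hpw ecs Hj) => ->; rewrite orbT.
  exists e; rewrite fe andbT; move: ep; rewrite mem_rcons in_cons.
  case/orP=> [/eqP->|ep]; first by rewrite xj eqxx.
  have ecs : e \in cs := mem_take ep.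
  move: (ecs); rewrite Hcs (@xatE _ xs y0) Hk /= => ->.
  by have := prec_take cj Hpw ecs Hj; rewrite -Ecj ep => ->; rewrite orbT.
rewrite HU big_split /= prodfV.
have Qn0 : \prod_(c <- take j.+1 cs) w C (Ik C xs k c :\ c) (scope (C cj) :\: Xk xs k) a != 0.
  by rewrite prodf_seq_neq0; apply/allP=> c cj'; rewrite Hden.
apply/eqP; rewrite eqr_div //; last by rewrite -HU.
by rewrite Pf mulrC.
Qed.
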